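(* Let $\mathcal{A}$ and $\mathcal{B}$ be regular languages, let $\mathcal{A}'=\{\otimes(a_1,a_2)\mid a_1,a_2\in\mathcal{A},\ |a_1|=|a_2|\}$, and let $\mathcal{B}'$ be any subset of $\otimes(\mathcal{B},\mathcal{B})=\{\otimes(b_1,b_2)\mid b_1,b_2\in\mathcal{B}\}$ which is a regular language. Let $\Lambda$ be any finite alphabet. Then $$\{\otimes(a_1b_1,\,a_2xb_2),\ \otimes(a_1yb_1,\,a_2b_2)\mid \otimes(a_1,a_2)\in\mathcal{A}',\ \otimes(b_1,b_2)\in\mathcal{B}',\ x,y\in\Lambda\}$$ is a regular language.
   Context: Convolution: for words $w_1,\dots,w_k$ over a finite alphabet and a padding symbol $\diamond$ not in the alphabet, $\otimes(w_1,\dots,w_k)$ is the word of length $\max_i|w_i|$ whose $p$-th letter is the column $(\lambda_1,\dots,\lambda_k)^T$, where $\lambda_r$ is the $p$-th letter of $w_r$ if $p\le|w_r|$ and $\diamond$ otherwise. Juxtaposition such as $a_1b_1$ denotes concatenation of words. *)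

(* Defs.v *)
From mathcomp Require Import all_boot.
Set Implicit Arguments. Unset Strict Implicit. Unset Printing Implicit Defensive.

Record dfa (X : finType) := DFA {
  dfa_state : finType;
  dfa_start : dfa_state;
  dfa_final : {set dfa_state};
  dfa_trans : dfa_state -> X -> dfa_state }.

Definition dfa_accept (X : finType) (M : dfa X) (w : seq X) : bool :=
  foldl (@dfa_trans X M) (dfa_start M) w \in dfa_final M.

Definition regular (X : finType) (L : seq X -> Prop) : Prop :=
  exists M : dfa X, forall w, L w <-> dfa_accept M w.

(* Convolution of two words; the padding symbol is None (not in the alphabet). *)
Definition conv2 (T : Type) (w1 w2 : seq T) : seq (option T * option T) :=
  [seq (nth None (map Some w1) i, nth None (map Some w2) i)
  | i <- iota 0 (maxn (size w1) (size w2))].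

Definition conv_same_length (T : Type) (A : seq T -> Prop)
  : seq (option T * option T) -> Prop :=
  fun w => exists a1 a2, A a1 /\ A a2 /\ size a1 = size a2 /\ w = conv2 a1 a2.

(* Main.v *)
Require Import Defs.
From mathcomp Require Import all_boot.
Set Implicit Arguments. Unset Strict Implicit. Unset Printing Implicit Defensive.

Section Gen.
Variable X : finType.

Lemma regular_ext (L L' : seq X -> Prop) :
  (forall w, L w <-> L' w) -> regular L -> regular L'.
Proof. by move=> H [M HM]; exists M => w; split => [/H/HM|/HM/H]. Qed.

Lemma foldl_pair (A B : Type) (f : A -> X -> A) (g : B -> X -> B) p q w :
  foldl (fun x a => (f x.1 a, g x.2 a)) (p, q) w = (foldl f p w, foldl g q w).
Proof. by elim: w p q => //= a w IH p q; rewrite IH. Qed.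

Definition prod_dfa (M1 M2 : dfa X) (op : bool -> bool -> bool) : dfa X :=
  @DFA X (dfa_state M1 * dfa_state M2)%type (dfa_start M1, dfa_start M2)
    [set x | op (x.1 \in dfa_final M1) (x.2 \in dfa_final M2)]
    (fun x a => (@dfa_trans X M1 x.1 a, @dfa_trans X M2 x.2 a)).

Lemma regular_and (L1 L2 : seq X -> Prop) :
  regular L1 -> regular L2 -> regular (fun w => L1 w /\ L2 w).
Proof.
move=> [M1 H1] [M2 H2]; exists (prod_dfa M1 M2 andb) => w.
rewrite /dfa_accept /= foldl_pair inE /=.
split=> [[/H1 h1 /H2 h2]|/andP[h1 h2]]; first by apply/andP.
by split; [apply/H1|apply/H2].
Qed.

Lemma regular_or (L1 L2 : seq X -> Prop) :
  regular L1 -> regular L2 -> regular (fun w => L1 w \/ L2 w).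
Proof.
move=> [M1 H1] [M2 H2]; exists (prod_dfa M1 M2 orb) => w.
rewrite /dfa_accept /= foldl_pair inE /=.
split=> [[/H1 h1|/H2 h2]|/orP[h1|h2]]; first by apply/orP; left.
- by apply/orP; right.
- by left; apply/H1.
- by right; apply/H2.
Qed.

Definition pmap_dfa (Y : finType) (f : X -> option Y) (M : dfa Y) : dfa X :=
  @DFA X (dfa_state M) (dfa_start M) (dfa_final M)
   (fun q a => if f a is Some b then @dfa_trans Y M q b else q).

Lemma regular_pmap (Y : finType) (f : X -> option Y) (L : seq Y -> Prop) :
  regular L -> regular (fun w => L (pmap f w)).
Proof.
move=> [M H]; exists (pmap_dfa f M) => w; apply: iff_trans (H _) _.
rewrite /dfa_accept /=.
suff -> : forall q, foldl (fun q a => if f a is Some b then @dfa_trans Y M q b else q) q w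
   = foldl (@dfa_trans Y M) q (pmap f w) by [].
elim: w => //= a w IH q; case: (f a) => [b|] /=; exact: IH.
Qed.

Lemma regular_map (Y : finType) (f : X -> Y) (L : seq Y -> Prop) :
  regular L -> regular (fun w => L (map f w)).
Proof.
move=> /(regular_pmap (fun a => Some (f a))); apply: regular_ext => w.
suff -> : pmap (fun a => Some (f a)) w = map f w by [].
by elim: w => //= a w ->.
Qed.

Lemma regular_all (P : pred X) : regular (fun w => all P w).
Proof.
exists (@DFA X bool true [set true] (fun b a => b && P a)) => w.
rewrite /dfa_accept /= inE.
suff -> : forall b, foldl (fun b a => b && P a) b w = b && all P w by case: (all P w).
by elim: w => [|a w IH] b /=; [rewrite andbT | rewrite IH andbA].
Qed.

Definition hd_ok (P : pred X) (w : seq X) : bool := if w is a :: _ then P a else false.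

Lemma regular_hd (P : pred X) : regular (fun w => hd_ok P w).
Proof.
exists (@DFA X (option bool) None [set Some true]
   (fun x a => if x is Some b then Some b else Some (P a))) => w.
rewrite /dfa_accept /=.
have E : forall b w, foldl (fun x a => if x is Some b then Some b else Some (P a)) (Some b) w = Some b.
  by move=> b; elim=> //= a w' IH.
case: w => [|a w] /=; first by rewrite inE.
by rewrite E inE; case: (P a).
Qed.

Definition srt_trans (r : rel X) (x : option (option X)) (a : X) : option (option X) :=
  match x with
  | None => None
  | Some None => Some (Some a)
  | Some (Some p) => if r p a then Some (Some a) else None
  end.

Lemma regular_sorted (r : rel X) : regular (fun w => sorted r w).
Proof.
exists (@DFA X (option (option X)) (Some None) [set x | x != None] (srt_trans r)) => w.
rewrite /dfa_accept /=.
have EN : forall w, foldl (srt_trans r) None w = None by elim.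
have E : forall p w, foldl (srt_trans r) (Some (Some p)) w =
   if path r p w then Some (Some (last p w)) else None.
  move=> p w'; elim: w' p => [|a w' IH] p //=.
  by case: (r p a) => /=; [exact: IH | rewrite EN].
case: w => [|a w] /=; first by rewrite inE.
by rewrite E; case: (path r a w); rewrite inE.
Qed.

Section Concat.
Variables M1 M2 : dfa X.
Local Notation Q1 := (dfa_state M1).
Local Notation Q2 := (dfa_state M2).
Definition cc_start : (Q1 * {set Q2})%type :=
  (dfa_start M1, if dfa_start M1 \in dfa_final M1 then [set dfa_start M2] else set0).
Definition cc_trans (x : (Q1 * {set Q2})%type) (a : X) : (Q1 * {set Q2})%type :=
  let p := @dfa_trans X M1 x.1 a in
  (p, [set @dfa_trans X M2 q a | q in x.2] :|:
       (if p \in dfa_final M1 then [set dfa_start M2] else set0)).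
Definition cc_dfa : dfa X := @DFA X (Q1 * {set Q2})%type cc_start
   [set x : (Q1 * {set Q2})%type | [exists q in x.2, q \in dfa_final M2]] cc_trans.

Lemma cc_inv w :
  (foldl cc_trans cc_start w).1 = foldl (@dfa_trans X M1) (dfa_start M1) w /\
  forall q, q \in (foldl cc_trans cc_start w).2 <->
    exists u v, w = u ++ v /\ dfa_accept M1 u /\ q = foldl (@dfa_trans X M2) (dfa_start M2) v.
Proof.
elim/last_ind: w => [|w a [IH1 IH2]].
  split=> // q /=; rewrite /dfa_accept; split.
    case: ifP => [H|]; last by rewrite inE.
    by rewrite inE => /eqP ->; exists [::], [::].
  case=> u [v [Huv [H ->]]]; move: Huv H; case: u => [|? ?]; case: v => [|? ?] //= _ H.
  by rewrite H inE.
split; first by rewrite !foldl_rcons /= IH1.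
move=> q; rewrite foldl_rcons /= IH1 inE; split.
  case/orP => [/imsetP [q' Hq' ->]|].
    case/IH2: Hq' => u [v [-> [Hu ->]]].
    by exists u, (rcons v a); rewrite rcons_cat foldl_rcons.
  case: ifP => [HF|]; last by rewrite inE.
  rewrite inE => /eqP ->; exists (rcons w a), [::].
  by rewrite cats0 /dfa_accept foldl_rcons HF.
case=> u [v [Huv [Hu ->]]]; case/lastP: v Huv => [|v b].
  rewrite cats0 => Ew; apply/orP; right; move: Hu.
  by rewrite /dfa_accept -Ew foldl_rcons => ->; rewrite inE.
rewrite -rcons_cat => /rcons_inj [Hw <-]; apply/orP; left.
rewrite foldl_rcons; apply: imset_f; apply/IH2.
by exists u, v.
Qed.
End Concat.

Lemma regular_concat (L1 L2 : seq X -> Prop) : regular L1 -> regular L2 ->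
  regular (fun w => exists u v, w = u ++ v /\ L1 u /\ L2 v).
Proof.
move=> [M1 H1] [M2 H2]; exists (cc_dfa M1 M2) => w.
rewrite /dfa_accept /= inE.
have [_ H] := cc_inv M1 M2 w.
split.
  case=> u [v [Ew [/H1 Hu /H2 Hv]]].
  apply/existsP; exists (foldl (@dfa_trans X M2) (dfa_start M2) v).
  rewrite andbC; apply/andP; split; first exact: Hv.
  by apply/H; exists u, v.
case/existsP=> q /andP [/H [u [v [-> [Hu Hq]]]] Hf].
exists u, v; split=> //; split; first exact/H1.
by apply/H2; rewrite /dfa_accept -Hq.
Qed.

Section SP.
Variables (Y : finType) (h : X -> X -> Y) (z : X).
Fixpoint spinit (p : X) (w : seq X) : seq Y :=
  if w is a :: w' then h p a :: spinit a w' else [::].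
Definition sp (w : seq X) : seq Y :=
  if w is a :: w' then rcons (spinit a w') (h (last a w') z) else [::].
Definition sp_trans (M : dfa Y) (x : (dfa_state M * option X)%type) (a : X)
  : (dfa_state M * option X)%type :=
  match x.2 with None => (x.1, Some a) | Some p => (@dfa_trans Y M x.1 (h p a), Some a) end.
Lemma sp_foldl M q p w : foldl (@sp_trans M) (q, Some p) w =
  (foldl (@dfa_trans Y M) q (spinit p w), Some (last p w)).
Proof. by elim: w q p => //= a w IH q p; rewrite IH. Qed.
Definition sp_dfa M := @DFA X (dfa_state M * option X)%type (dfa_start M, None)
  [set x | if x.2 is Some p then @dfa_trans Y M x.1 (h p z) \in dfa_final M
           else x.1 \in dfa_final M] (@sp_trans M).
Lemma regular_sp L : regular L -> regular (fun w => L (sp w)).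
Proof.
move=> [M H]; exists (sp_dfa M) => w; apply: iff_trans (H _) _.
rewrite /dfa_accept /=; case: w => [|a w] /=; first by rewrite inE.
by rewrite sp_foldl inE /= foldl_rcons.
Qed.
End SP.
End Gen.

Section Conv.
Variable T : eqType.

Fixpoint cv (s t : seq T) : seq (option T * option T) :=
  match s with
  | [::] => map (fun b => (None, Some b)) t
  | a :: s' => match t with
     | [::] => map (fun a => (Some a, None)) s
     | b :: t' => (Some a, Some b) :: cv s' t' end end.

Lemma cv_nil_r s : cv s [::] = map (fun a => (Some a, None)) s.
Proof. by case: s. Qed.

Lemma conv2_step s t : conv2 s t =
  if (s, t) is ([::], [::]) then [::] else (ohead s, ohead t) :: conv2 (@behead T s) (@behead T t).
Proof.
case: s t => [|a s] [|b t] //; rewrite /conv2 /= ?maxnSS ?max0n ?maxn0 /=; congr cons;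
 rewrite -[1]/(1+0) iotaDl -map_comp; apply: eq_map => i /=; by rewrite add0n ?nth_nil.
Qed.

Lemma conv2E s t : conv2 s t = cv s t.
Proof.
elim: s t => [|a s IH] t.
  by elim: t => [|b t IHt]; rewrite conv2_step //= IHt.
case: t => [|b t]; rewrite conv2_step /= IH //.
by rewrite cv_nil_r.
Qed.

Lemma cv_cat a1 a2 b1 b2 : size a1 = size a2 ->
  cv (a1 ++ b1) (a2 ++ b2) = cv a1 a2 ++ cv b1 b2.
Proof. by elim: a1 a2 => [|x a1 IH] [|y a2] //= [/IH ->]. Qed.

Lemma pmap_fst_cv s t : pmap fst (cv s t) = s.
Proof.
elim: s t => [|a s IH] [|b t] /=; first by [].
- by elim: t.
- by rewrite -cv_nil_r IH.
- by rewrite IH.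
Qed.

Lemma pmap_snd_cv s t : pmap snd (cv s t) = t.
Proof.
elim: s t => [|a s IH] [|b t] /=; first by [].
- by congr cons; elim: t => //= c t ->.
- by clear IH; elim: s.
- by rewrite IH.
Qed.

Definition swp (p : option T * option T) := (p.2, p.1).

Lemma map_swp_cv s t : map swp (cv s t) = cv t s.
Proof.
elim: s t => [|a s IH] [|b t] //=.
- by congr cons; rewrite -map_comp.
- by rewrite -map_comp.
- by rewrite IH.
Qed.

Definition ropt (a b : option T) : bool :=
  match a, b with None, Some _ => false | _, _ => true end.
Definition nn (p : option T * option T) : bool :=
  match p with (None, None) => false | _ => true end.
Definition validb (w : seq (option T * option T)) : bool :=
  [&& all nn w, sorted ropt (map fst w) & sorted ropt (map snd w)].

Lemma map_fst_cv s t : map fst (cv s t) = map Some s ++ nseq (size t - size s) None.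
Proof.
elim: s t => [|a s IH] [|b t] //=.
- by congr cons; elim: t => //= c t ->.
- by rewrite -map_comp cats0.
- by rewrite IH subSS.
Qed.

Lemma map_snd_cv s t : map snd (cv s t) = map Some t ++ nseq (size s - size t) None.
Proof.
elim: s t => [|a s IH] [|b t] //=.
- by rewrite -map_comp cats0.
- by congr cons; clear IH; elim: s => //= c s ->.
- by rewrite IH subSS.
Qed.

Lemma path_ropt_nseq k : path ropt None (nseq k None).
Proof. by elim: k. Qed.

Lemma sorted_pad s k : sorted ropt (map Some s ++ nseq k None).
Proof.
case: s => [|a s] /=; first by case: k => //= k; exact: path_ropt_nseq.
elim: s a => [|b s IH] a /=; last exact: IH.
by case: k => //= k; exact: path_ropt_nseq.
Qed.

Lemma valid_cv s t : validb (cv s t).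
Proof.
apply/and3P; split; rewrite ?map_fst_cv ?map_snd_cv ?sorted_pad //.
elim: s t => [|a s IH] [|b t] //=.
- by elim: t.
- by clear IH; elim: s.
Qed.

Lemma validP w : validb w -> exists s t, w = cv s t.
Proof.
elim: w => [|[p1 p2] w IH] /=; first by exists [::], [::].
case/and3P => /andP [Hnn Hall] H1 H2.
have [s [t Hw]] : exists s t, w = cv s t.
  by apply: IH; apply/and3P; split => //; [exact: path_sorted H1 | exact: path_sorted H2].
subst w; clear IH Hall.
case: p1 p2 Hnn H1 H2 => [x|] [y|] //= _ H1 H2.
- by exists (x :: s), (y :: t).
- case: t H1 H2 => [|b t] H1 H2; last by case: s H1 H2.
  by exists (x :: s), [::]; rewrite /= cv_nil_r.
- case: s H1 H2 => [|a s] H1 H2; last by case: t H1 H2.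
  by exists [::], (y :: t).
Qed.

End Conv.

Section Main.
Variable Sigma : finType.
Local Notation Lt := (option Sigma * option Sigma)%type.

Definition hS (p a : Lt) : Lt := (p.1, a.2).
Definition zz : Lt := (None, None).
Definition spaux (p : Lt) (w : seq Lt) : seq Lt :=
  rcons (spinit hS p w) (hS (last p w) zz).

Lemma L2 t d : filter (@nn Sigma) (spaux (None, d) (cv [::] t)) = cv [::] t.
Proof. elim: t d => [|b t IH] d //=. by have := IH (Some b); rewrite /spaux /= => ->. Qed.

Lemma L1 s t a d : filter (@nn Sigma) (spaux (Some a, d) (cv s t)) = cv (a :: s) t.
Proof.
elim: s t a d => [|a' s IH] [|b t] a d //=.
- by have := L2 t (Some b); rewrite /spaux /= => ->.
- by have := IH [::] a' None; rewrite cv_nil_r /spaux /= => ->.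
- by have := IH t a' (Some b); rewrite /spaux /= => ->.
Qed.

Definition unsh (w : seq Lt) := filter (@nn Sigma) (sp hS zz w).

Lemma unsh_cv b1 x b2 : unsh (cv b1 (x :: b2)) = cv b1 b2.
Proof.
case: b1 => [|a s].
- exact: (L2 b2 (Some x)).
- exact: (L1 s b2 a (Some x)).
Qed.


Variable Lambda : {set Sigma}.

Definition headok (w : seq Lt) : bool :=
  hd_ok (fun p : Lt => if p.2 is Some x then x \in Lambda else false) w.

Definition Sx (B' : seq Lt -> Prop) (v : seq Lt) : Prop :=
  exists x b1 b2, x \in Lambda /\ B' (cv b1 b2) /\ v = cv b1 (x :: b2).

Lemma Sx_char B' v : Sx B' v <-> (validb v && headok v) /\ B' (unsh v).
Proof.
split.
  case=> x [b1 [b2 [Hx [Hb ->]]]]; rewrite valid_cv unsh_cv; split => //.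
  by case: b1 Hb.
move=> [/andP [/validP [s [t ->]] Hh] HB].
case: t Hh HB => [|x b2] Hh HB; first by case: s Hh HB.
exists x, s, b2; rewrite unsh_cv in HB; split; [by case: s Hh HB | by []].
Qed.

Lemma regular_validhd : regular (fun v : seq Lt => validb v && headok v).
Proof.
have R1 := regular_all (@nn Sigma).
have R2 := regular_map (@fst (option Sigma) (option Sigma)) (regular_sorted (@ropt Sigma)).
have R3 := regular_map (@snd (option Sigma) (option Sigma)) (regular_sorted (@ropt Sigma)).
have R4 := regular_hd (fun p : Lt => if p.2 is Some x then x \in Lambda else false).
apply: regular_ext (regular_and (regular_and R1 R2) (regular_and R3 R4)) => w.
rewrite /validb /headok.
by split => [[[-> ->] [-> ->]]|/andP[/and3P[-> -> ->] ->]].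
Qed.

Lemma regular_Sx B' : regular B' -> regular (Sx B').
Proof.
move=> HB.
apply: regular_ext (regular_and regular_validhd _) => [v|].
  exact: iff_sym (Sx_char B' v).
apply: (regular_sp hS zz (L := fun u => B' (filter (@nn Sigma) u))).
apply: regular_ext (regular_pmap (fun a : Lt => if nn a then Some a else None) HB) => u.
suff -> : pmap (fun a : Lt => if nn a then Some a else None) u = filter (@nn Sigma) u by [].
by elim: u => //= a u ->; case: (nn a).
Qed.

Definition Apair (A : seq Sigma -> Prop) (u : seq Lt) : Prop :=
  exists a1 a2, A a1 /\ A a2 /\ size a1 = size a2 /\ u = cv a1 a2.

Definition bs (p : Lt) : bool := match p with (Some _, Some _) => true | _ => false end.

Lemma Apair_char A u : Apair A u <-> all bs u /\ A (pmap fst u) /\ A (pmap snd u).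
Proof.
split.
  case=> a1 [a2 [H1 [H2 [Hs ->]]]]; rewrite pmap_fst_cv pmap_snd_cv; split => //.
  by elim: a1 a2 Hs {H1 H2} => [|x a1 IH] [|y a2] //= [/IH].
move=> [Hb [H1 H2]].
have [E S] : u = cv (pmap fst u) (pmap snd u) /\ size (pmap fst u) = size (pmap snd u).
  by elim: u Hb {H1 H2} => [|[[x|] [y|]] u IH] //= /IH [E S]; split; [rewrite -E | rewrite S].
by exists (pmap fst u), (pmap snd u).
Qed.

Lemma regular_Apair A : regular A -> regular (Apair A).
Proof.
move=> HA.
apply: regular_ext (regular_and (regular_all bs)
   (regular_and (regular_pmap (@fst (option Sigma) (option Sigma)) HA)
                (regular_pmap (@snd (option Sigma) (option Sigma)) HA))) => u.
exact: iff_sym (Apair_char A u).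
Qed.

End Main.

Lemma swp_inv (T : eqType) (v : seq (option T * option T)) : map (@swp T) (map (@swp T) v) = v.
Proof. by elim: v => //= [[a b] v] ->. Qed.

Theorem lemma3p5 (Sigma : finType) (A B : seq Sigma -> Prop)
  (B' : seq (option Sigma * option Sigma) -> Prop) (Lambda : {set Sigma}) :
  regular A -> regular B -> regular B' ->
  (forall w, B' w -> exists b1 b2, B b1 /\ B b2 /\ w = conv2 b1 b2) ->
  regular (fun w =>
    exists a1 a2 b1 b2,
      conv_same_length A (conv2 a1 a2) /\ B' (conv2 b1 b2) /\
      ((exists x, x \in Lambda /\ w = conv2 (a1 ++ b1) (a2 ++ x :: b2)) \/
       (exists y, y \in Lambda /\ w = conv2 (a1 ++ y :: b1) (a2 ++ b2)))).
Proof.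
move=> HA _ HB' _.
pose B'' := fun w => B' (map (@swp Sigma) w).
have HB'' : regular B'' := regular_map (@swp Sigma) HB'.
have R := regular_concat (regular_Apair HA)
  (regular_or (regular_Sx Lambda HB') (regular_map (@swp Sigma) (regular_Sx Lambda HB''))).
apply: regular_ext R => w; split.
  case=> u [v [-> [[a1 [a2 [Ha1 [Ha2 [Hs ->]]]]] Hor]]].
  case: Hor => [[x [b1 [b2 [Hx [Hb ->]]]]]|[y [c1 [c2 [Hy [Hc Hv]]]]]].
    exists a1, a2, b1, b2; rewrite !conv2E; split; first by exists a1, a2; rewrite conv2E.
    split => //; left; exists x; split => //.
    by rewrite conv2E cv_cat.
  have Ev : v = cv (y :: c2) c1 by rewrite -(swp_inv v) Hv map_swp_cv.
  exists a1, a2, c2, c1; rewrite !conv2E; split; first by exists a1, a2; rewrite conv2E.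
  split; first by move: Hc; rewrite /B'' map_swp_cv.
  right; exists y; split => //.
  by rewrite conv2E cv_cat // Ev.
case=> a1 [a2 [b1 [b2 [Hsl [Hb Hor]]]]].
case: Hsl => a1' [a2' [Ha1 [Ha2 [Hs E]]]].
rewrite !conv2E in E Hb.
have E1 := congr1 (pmap fst) E; have E2 := congr1 (pmap snd) E.
rewrite !pmap_fst_cv in E1; rewrite !pmap_snd_cv in E2; subst a1' a2'.
case: Hor => [[x [Hx ->]]|[y [Hy ->]]]; rewrite conv2E cv_cat //.
  exists (cv a1 a2), (cv b1 (x :: b2)); split => //; split; first by exists a1, a2.
  by left; exists x, b1, b2.
exists (cv a1 a2), (cv (y :: b1) b2); split => //; split; first by exists a1, a2.
right; exists y, b2, b1; split => //; split; last by rewrite map_swp_cv.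
by rewrite /B'' map_swp_cv.
Qed.
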